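(* Let $\boldsymbol\mu>\mathbf 0$ and assume $\mathbf I-\mathbf G$ is irreducible for every $\mathbf G\in\mathcal G(\boldsymbol\mu)$. Let $\Omega_1,\dots,\Omega_M\subseteq\{1,\dots,N\}$ be nonempty and $\bar p_{\Omega_1},\dots,\bar p_{\Omega_M}>0$, and let $\mathcal P=\{\mathbf p\in\mathbb R^N:\mathbf p\geq\mathbf 0,\ \sum_{i\in\Omega_m}p_i\leq\bar p_{\Omega_m},\ m=1,\dots,M\}$. Then there exists $\mathbf p\in\mathcal P$ with $\mathbf A(\boldsymbol\mu)\mathbf p\geq\mathbf n(\boldsymbol\mu)$ if and only if $$\max_{\mathbf G\in\mathcal G(\boldsymbol\mu)}\ \max_{m\in\{1,\dots,M\}}\ \lambda\Big(\psi\big(\mathbf I-\mathbf G,\ \tfrac{1}{\bar p_{\Omega_m}}\mathbf n_{\mathbf G},\ \Omega_m\big)\Big)\leq 1.$$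
   Context: Multicast system: $N$ transmitters; transmitter $T_i$ has $K_i\geq1$ receivers $R_i^{k}$, $k\in\mathcal K_i=\{1,\dots,K_i\}$. Channel gains $g_{r_i^{k},t_j}\geq 0$ (from $T_j$ to $R_i^k$) with $g_{r_i^{k},t_i}>0$; noise variance $\sigma^2>0$. For $\boldsymbol\mu\in\mathbb R^N$, $\mathbf a_i^{k}(\boldsymbol\mu)\in\mathbb R^{1\times N}$ is the row vector with $i$-th entry $1$ and $j$-th entry $-\mu_i g_{r_i^{k},t_j}/g_{r_i^{k},t_i}$ for $j\neq i$; $n_i^{k}(\boldsymbol\mu)=\mu_i\sigma^2/g_{r_i^{k},t_i}$. $\mathbf A(\boldsymbol\mu)$ stacks all rows $\mathbf a_i^k(\boldsymbol\mu)$ and $\mathbf n(\boldsymbol\mu)$ the corresponding $n_i^k(\boldsymbol\mu)$. $\mathcal G(\boldsymbol\mu)$ is the set of $N\times N$ matrices whose $i$-th row is $\mathbf a_i^{k_i}(\boldsymbol\mu)$ for some $k_i\in\mathcal K_i$; for such $\mathbf G$, $\mathbf n_{\mathbf G}=(n_1^{k_1}(\boldsymbol\mu),\dots,n_N^{k_N}(\boldsymbol\mu))^T$. For a matrix $\mathbf X\in\mathbb R^{N\times N}$, a vector $\mathbf y\in\mathbb R^N$ and $\Omega\subseteq\{1,\dots,N\}$, $\psi(\mathbf X,\mathbf y,\Omega)$ is the matrix obtained from $\mathbf X$ by adding $\mathbf y$ to the $j$-th column for every $j\in\Omega$ (other columns unchanged). $\lambda(\cdot)$ is the Perron–Frobenius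 eigenvalue (spectral radius) of a nonnegative square matrix. *)

(* Defs.v *)
From HB Require Import structures.
From mathcomp Require Import all_boot all_order all_algebra.
Unset Printing Implicit Defensive.
Import Order.TTheory GRing.Theory Num.Theory.
Local Open Scope ring_scope.

Section Defs.
Variable R : rcfType.

(* a + b i is a complex eigenvalue of the real matrix A:  det((a+bi)I - A) = 0.
   Realified: det [[aI-A, -bI],[bI, aI-A]] = |det((a+bi)I - A)|^2. *)
Definition ceig n (A : 'M[R]_n) (a b : R) : bool :=
  \det (block_mx (a%:M - A) (- b%:M) (b%:M) (a%:M - A)) == 0.

Definition spectral_radius n (A : 'M[R]_n) (r : R) : Prop :=
  (exists a b, ceig n A a b /\ r = Num.sqrt (a ^+ 2 + b ^+ 2)) /\
  (forall a b, ceig n A a b -> Num.sqrt (a ^+ 2 + b ^+ 2) <= r).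

(* irreducible: no permutation makes X block triangular, i.e. there is no
   nonempty proper index set S with X i j = 0 for all i in S, j not in S. *)
Definition irreducible_mx n (X : 'M[R]_n) : Prop :=
  forall S : {set 'I_n}, S != set0 -> S != setT ->
    exists i j, [/\ i \in S, j \notin S & X i j != 0].

Definition psi n (X : 'M[R]_n) (y : 'cV[R]_n) (Om : {set 'I_n}) : 'M[R]_n :=
  \matrix_(i, j) (X i j + (if j \in Om then y i 0 else 0)).

Variables (N : nat) (K : 'I_N -> nat)
  (g : forall i : 'I_N, 'I_(K i) -> 'I_N -> R) (sigma2 : R).

Definition a_row (mu : 'I_N -> R) (i : 'I_N) (k : 'I_(K i)) : 'rV[R]_N :=
  \row_j (if j == i then 1 else - (mu i * g i k j / g i k i)).

Definition n_elt (mu : 'I_N -> R) (i : 'I_N) (k : 'I_(K i)) : R :=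
  mu i * sigma2 / g i k i.

(* A(mu) p >= n(mu), row by row over all stacked rows (i,k) *)
Definition A_ge_n (mu : 'I_N -> R) (p : 'cV[R]_N) : Prop :=
  forall i (k : 'I_(K i)), n_elt mu i k <= (a_row mu i k *m p) 0 0.

(* G in calG(mu), determined by a choice kk i in K_i of receiver per row *)
Definition Gmat (mu : 'I_N -> R) (kk : forall i : 'I_N, 'I_(K i)) : 'M[R]_N :=
  \matrix_(i, j) a_row mu i (kk i) 0 j.

Definition nG (mu : 'I_N -> R) (kk : forall i : 'I_N, 'I_(K i)) : 'cV[R]_N :=
  \col_i n_elt mu i (kk i).

End Defs.

(* Main.v *)
Require Import Defs.
From HB Require Import structures.
From mathcomp Require Import all_boot all_order all_algebra.
From mathcomp Require Import polyrcf zify complex lra ring.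
From Stdlib Require Import Classical.
Import Order.TTheory GRing.Theory Num.Theory.
Local Open Scope ring_scope.
Set Implicit Arguments.
Unset Strict Implicit.

Section Aux.
Variable R : rcfType.

Lemma sign_noroot (p : {poly R}) x b : x <= b ->
  (forall y, x < y <= b -> ~~ root p y) -> 0 <= p.[x] * p.[b].
Proof.
move=> xb hn; rewrite leNgt; apply/negP => h.
have [y hy ry] := poly_ivtoo xb h.
move: hy; rewrite in_itv /= => /andP[h1 h2].
by move: (hn y); rewrite h1 (ltW h2) ry => /(_ isT).
Qed.

Lemma largest_root (p : {poly R}) a b : p != 0 ->
  (exists x, a <= x <= b /\ root p x) ->
  exists x, [/\ a <= x <= b, root p x & forall y, x < y <= b -> ~~ root p y].
Proof.
move: {2}(size p) (leqnn (size p)) => s; elim: s p => [|s IH] p hs p0 [r [hr rr]].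
  by move: p0; rewrite -size_poly_eq0; move: hs; rewrite leqn0 => /eqP ->.
have dv : ('X - r%:P) %| p by rewrite dvdp_XsubCl.
set p' := p %/ ('X - r%:P).
have hp : p = p' * ('X - r%:P) by rewrite divpK.
have p'0 : p' != 0 by move: p0; rewrite hp mulf_eq0 negb_or => /andP[].
have sp' : (size p' <= s)%N.
  rewrite size_divp ?polyXsubC_eq0 // size_XsubC /= subn1; move: hs; case: (size p) => //=.
have rE : forall y, root p y = root p' y || (y == r).
  by move=> y; rewrite hp rootM root_XsubC.
case: (classic (exists x, a <= x <= b /\ root p' x)) => [ex|nex].
  have [x' [hx' rx' nx']] := IH p' sp' p'0 ex.
  case: (leP r x') => hrx.
    exists x'; split => //; first by rewrite rE rx'.
    move=> y /andP[h1 h2]; rewrite (rE y) negb_or nx' ?h1 ?h2 //=.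
    by rewrite gt_eqF // (le_lt_trans hrx h1).
  exists r; split => //.
  move=> y /andP[h1 h2]; rewrite rE negb_or gt_eqF // andbT.
  by apply: nx'; rewrite (lt_trans hrx h1) h2.
exists r; split => //.
move=> y /andP[h1 h2]; rewrite rE negb_or gt_eqF // andbT.
apply/negP => ry; apply: nex; exists y; split => //.
by case/andP: hr => hr1 _; rewrite h2 (le_trans hr1 (ltW h1)).
Qed.


Lemma zmat_pos (n : nat) (G : 'M[R]_n) (v w : 'cV[R]_n) :
  (forall i j, i != j -> G i j <= 0) ->
  (forall i, 0 < v i 0) -> (forall i, 0 < (G *m v) i 0) ->
  (forall i, 0 <= (G *m w) i 0) -> forall i, 0 <= w i 0.
Proof.
move=> hG hv hGv hGw i; rewrite leNgt; apply/negP => wi.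
pose F := fun j => w j 0 / v j 0.
case: (@arg_minP _ R _ i (fun=> true) F isT) => i1 _ hmin.
set t := F i1.
have tneg : t < 0.
  apply: (le_lt_trans (hmin i isT)); rewrite /F pmulr_llt0 //.
  by rewrite invr_gt0.
have hle : forall j, t * v j 0 <= w j 0.
  by move=> j; rewrite -ler_pdivlMr //; exact: hmin.
have : (G *m w) i1 0 <= t * (G *m v) i1 0.
  rewrite !mxE mulr_sumr; apply: ler_sum => j _.
  have [->|nj] := eqVneq j i1.
    by rewrite /t /F mulrCA divfK ?gt_eqF.
  by rewrite mulrCA; apply: ler_wnM2l; [apply: hG; rewrite eq_sym|].
rewrite leNgt => /negP; apply; apply: (lt_le_trans _ (hGw i1)).
by rewrite nmulr_rlt0.
Qed.

Lemma sign_tr (a b c : R) : 0 <= a * b -> 0 < b * c -> 0 <= a * c.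
Proof.
move=> h1 h2.
have b0 : b != 0 by apply: contraTneq h2 => ->; rewrite mul0r ltxx.
have : 0 <= (a * c) * (b * b).
  by rewrite mulrACA [c * b]mulrC mulr_ge0 // ltW.
by rewrite pmulr_lge0 // lt_def mulf_neq0 // -expr2 sqr_ge0.
Qed.

Lemma sign_trs (a b c : R) : 0 < a * b -> 0 < b * c -> 0 < a * c.
Proof.
move=> h1 h2; rewrite lt_def (sign_tr (ltW h1) h2) andbT.
apply: contraTneq h1 => /eqP; rewrite mulf_eq0 => /orP[]/eqP a0.
  by rewrite a0 mul0r ltxx.
by move: h2; rewrite a0 mulr0 ltxx.
Qed.

End Aux.

Section PF.
Variables (R : rcfType) (n : nat) (C : 'M[R]_n) (i0 : 'I_n).
Hypothesis hC : forall i j, 0 <= C i j.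

Definition good (t : R) := exists v : 'cV[R]_n,
  (forall i, 0 < v i 0) /\ (forall i, (C *m v) i 0 < t * v i 0).

Definition chiC := char_poly C.
Definition qC (i : 'I_n) : {poly R} :=
  (\adj (char_poly_mx C) *m (const_mx 1 : 'cV[{poly R}]_n)) i 0.

Lemma Cw_ge0 (w : 'cV[R]_n) : (forall i, 0 <= w i 0) -> forall i, 0 <= (C *m w) i 0.
Proof. by move=> hw i; rewrite mxE; apply: sumr_ge0 => j _; rewrite mulr_ge0. Qed.

Lemma ident i : 'X * qC i - \sum_j (C i j)%:P * qC j = chiC.
Proof.
have := congr1 (fun M => (M *m (const_mx 1 : 'cV[{poly R}]_n)) i 0) (mul_mx_adj (char_poly_mx C)).
rewrite /= -mulmxA /char_poly_mx mulmxBl !mul_scalar_mx !mxE mulr1 /chiC /char_poly /char_poly_mx => <-.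
rewrite /qC; congr (_ - _).
- by rewrite /char_poly_mx [in LHS]mxE.
- by apply: eq_bigr => j _; rewrite /char_poly_mx [X in _ = X * _]mxE.
Qed.

Lemma ident_ev (t : R) i : t * (qC i).[t] - \sum_j C i j * (qC j).[t] = chiC.[t].
Proof.
rewrite -(ident i) hornerD hornerN hornerM hornerX horner_sum.
by congr (_ - _); apply: eq_bigr => j _; rewrite hornerM hornerC.
Qed.

Lemma chi_det t : chiC.[t] = \det (t%:M - C).
Proof.
rewrite /chiC /char_poly -horner_evalE -det_map_mx; congr (\det _).
apply/matrixP => i j; rewrite !mxE /= horner_evalE hornerD hornerN hornerC.
by rewrite hornerMn hornerX.
Qed.

Lemma off_le0 t i j : i != j -> (t%:M - C) i j <= 0.
Proof. by move=> ij; rewrite !mxE (negPf ij) mulr0n sub0r oppr_le0. Qed.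

Lemma good_pos t : good t -> 0 < t.
Proof.
case=> v [hv hCv]; have := hCv i0.
have := @Cw_ge0 v (fun i => ltW (hv i)) i0 => h1 h2.
by have := le_lt_trans h1 h2; rewrite pmulr_lgt0.
Qed.

Lemma good_Gv t (v : 'cV[R]_n) : (forall i, (C *m v) i 0 < t * v i 0) ->
  forall i, 0 < ((t%:M - C) *m v) i 0.
Proof.
by move=> h i; have := h i; rewrite mulmxBl mul_scalar_mx !mxE subr_gt0.
Qed.

Lemma good_det t : good t -> chiC.[t] != 0.
Proof.
move=> gt; case: (gt) => v [hv hCv].
rewrite chi_det -det_tr; apply/negP => /det0P [u u0 hu].
have hw : (t%:M - C) *m u^T = 0 by rewrite -[LHS]trmxK trmx_mul trmxK hu trmx0.
have p1 : forall i, 0 <= u^T i 0.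
  apply: (zmat_pos (@off_le0 t) hv (good_Gv hCv)).
  by move=> i; rewrite hw mxE.
have p2 : forall i, 0 <= (- u^T) i 0.
  apply: (zmat_pos (@off_le0 t) hv (good_Gv hCv)).
  by move=> i; rewrite mulmxN hw oppr0 mxE.
move/eqP: u0; apply; apply/matrixP => i j; rewrite (ord1 i) mxE.
apply/eqP; rewrite eq_le; have := p1 j; have := p2 j.
by rewrite !mxE oppr_ge0 => -> ->.
Qed.

Lemma goodP t (w : 'cV[R]_n) : (forall i, 0 <= w i 0) ->
  (forall i, t * w i 0 - (C *m w) i 0 = 1) -> good t.
Proof.
move=> hw he; exists w; split => i.
  have h := he i; have c0 := @Cw_ge0 w hw i.
  have : 0 < t * w i 0 by rewrite -(subrK ((C *m w) i 0) (t * w i 0)) h; apply: ltr_pwDl.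
  move=> tw; rewrite lt_def (hw i) andbT.
  by apply: contraTneq tw => ->; rewrite mulr0 ltxx.
by rewrite -subr_gt0 he.
Qed.

Lemma from_poly (qq : 'I_n -> {poly R}) (e : {poly R}) t :
  (forall i, t * (qq i).[t] - \sum_j C i j * (qq j).[t] = e.[t]) ->
  e.[t] != 0 -> (forall i, 0 <= (qq i).[t] * e.[t]) -> good t.
Proof.
move=> hid e0 hs; apply: (@goodP t (\col_i ((qq i).[t] / e.[t]))).
  move=> i; rewrite mxE.
  have -> : (qq i).[t] / e.[t] = ((qq i).[t] * e.[t]) / (e.[t] ^+ 2).
    by rewrite expr2 invfM mulrA mulfK.
  by rewrite divr_ge0 ?sqr_ge0.
move=> i; rewrite !mxE.
have -> : \sum_j C i j * (\col_i0 ((qq i0).[t] / e.[t])) j 0 =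
   (\sum_j C i j * (qq j).[t]) / e.[t].
  by rewrite mulr_suml; apply: eq_bigr => j _; rewrite mxE mulrA.
by rewrite mulrA -mulrBl hid divff.
Qed.

Lemma good_inv t : good t -> chiC.[t] != 0 /\ forall i, 0 < (qC i).[t] * chiC.[t].
Proof.
move=> gt; have c0 := good_det gt; split => // i.
case: (gt) => v [hv hCv].
have [w [hw hwE]] : exists w : 'cV[R]_n, (forall k, ((t%:M - C) *m w) k 0 = 1)
   /\ (forall k, w k 0 = (qC k).[t] / chiC.[t]).
  exists (\col_i ((qC i).[t] / chiC.[t])); split => k; last by rewrite mxE.
  rewrite mulmxBl mul_scalar_mx !mxE.
  have -> : \sum_j C k j * (\col_i ((qC i).[t] / chiC.[t])) j 0
     = (\sum_j C k j * (qC j).[t]) / chiC.[t].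
    by rewrite mulr_suml; apply: eq_bigr => j _; rewrite mxE mulrA.
  by rewrite mulrA -mulrBl ident_ev divff.
have w0 : forall i, 0 <= w i 0.
  apply: (zmat_pos (@off_le0 t) hv (good_Gv hCv)).
  by move=> k; rewrite hw.
have : 0 < w i 0.
  have h : t * w i 0 - (C *m w) i 0 = 1.
    by rewrite -(hw i) mulmxBl mul_scalar_mx [RHS]mxE [in RHS]mxE [in RHS]mxE.
  have c1 := @Cw_ge0 w w0 i.
  have : 0 < t * w i 0.
    by rewrite -(subrK ((C *m w) i 0) (t * w i 0)) h; apply: ltr_pwDl.
  by rewrite pmulr_rgt0 // (good_pos gt).
rewrite hwE => h.
have -> : (qC i).[t] * chiC.[t] = ((qC i).[t] / chiC.[t]) * (chiC.[t] ^+ 2).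
  by rewrite expr2 mulrA divfK.
by rewrite mulr_gt0 // lt_def sqrf_eq0 c0 sqr_ge0.
Qed.


Definition Ident (qq : 'I_n -> {poly R}) (e : {poly R}) :=
  forall i, 'X * qq i - \sum_j (C i j)%:P * qq j = e.

Definition Inv (tau tb : R) (qq : 'I_n -> {poly R}) (e : {poly R}) :=
  forall y, tau < y <= tb -> e.[y] != 0 /\ forall i, 0 < (qq i).[y] * e.[y].

Lemma Ident_ev qq e : Ident qq e ->
  forall t i, t * (qq i).[t] - \sum_j C i j * (qq j).[t] = e.[t].
Proof.
move=> hid t i; rewrite -(hid i) hornerD hornerN hornerM hornerX horner_sum.
by congr (_ - _); apply: eq_bigr => j _; rewrite hornerM hornerC.
Qed.

Lemma prod_pos_neq0 (a b : R) : 0 < a * b -> a != 0 /\ b != 0.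
Proof.
move=> h; split; apply: contraTneq h => ->; by rewrite ?mul0r ?mulr0 ltxx.
Qed.

Lemma Inv_noroot tau tb qq e : Inv tau tb qq e ->
  (forall i y, tau < y <= tb -> ~~ root (qq i) y) /\
  (forall y, tau < y <= tb -> ~~ root e y).
Proof.
move=> hinv; split.
  by move=> i y hy; have [_ /(_ i) /prod_pos_neq0 []] := hinv y hy.
by move=> y hy; have [] := hinv y hy.
Qed.

Lemma caseA tau tb qq e : tau < tb -> ~ good tau -> Ident qq e -> Inv tau tb qq e ->
  (exists i, (qq i).[tau] != 0) ->
  exists v : 'cV[R]_n, [/\ v != 0, forall i, 0 <= v i 0 & C *m v = tau *: v].
Proof.
move=> ltb ngt hid hinv [i1 hi1].
have hev := Ident_ev hid.
have [nrq nre] := Inv_noroot hinv.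
have hbb : tau < tb <= tb by rewrite ltb lexx.
have [eb qb] := hinv tb hbb.
have sq : forall i, 0 <= (qq i).[tau] * (qq i).[tb].
  by move=> i; apply: sign_noroot (ltW ltb) (nrq i).
have sA : forall i, 0 <= (qq i).[tau] * e.[tb].
  by move=> i; apply: (sign_tr (sq i) (qb i)).
have e0 : e.[tau] = 0.
  apply/eqP; apply/negPn/negP => et; apply: ngt.
  have se : 0 < e.[tb] * e.[tau].
    rewrite lt_def mulf_neq0 //= mulrC; exact: sign_noroot (ltW ltb) nre.
  apply: (@from_poly qq e tau (hev tau) et) => i.
  exact: (sign_tr (sA i) se).
exists (\col_i ((qq i).[tau] * e.[tb])); split.
- apply/negP => /eqP /matrixP /(_ i1 0); rewrite !mxE => /eqP.
  by rewrite mulf_eq0 (negPf hi1) (negPf eb).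
- by move=> i; rewrite mxE.
- apply/matrixP => i j; rewrite (ord1 j) !mxE.
  have := hev tau i; rewrite e0 => /eqP; rewrite subr_eq0 => /eqP h.
  rewrite mulrA h mulr_suml; apply: eq_bigr => k _.
  by rewrite mxE mulrA.
Qed.

Lemma caseB tau tb qq e : Ident qq e -> Inv tau tb qq e ->
  (forall i, (qq i).[tau] = 0) -> qq i0 != 0 ->
  exists (qq' : 'I_n -> {poly R}) (e' : {poly R}), [/\ (size (qq' i0) < size (qq i0))%N, Ident qq' e' & Inv tau tb qq' e'].
Proof.
move=> hid hinv hz q0.
have hev := Ident_ev hid.
have e0 : e.[tau] = 0.
  by rewrite -(hev tau i0) hz mulr0 big1 ?subr0 // => j _; rewrite hz mulr0.
pose D := 'X - tau%:P.
have D0 : D != 0 by rewrite polyXsubC_eq0.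
have dq : forall i, qq i %/ D * D = qq i.
  by move=> i; rewrite divpK // dvdp_XsubCl rootE hz.
have de : e %/ D * D = e by rewrite divpK // dvdp_XsubCl rootE e0.
exists (fun i => qq i %/ D), (e %/ D); split.
- rewrite size_divp // size_XsubC /=.
  by move: q0; rewrite -size_poly_eq0; case: (size (qq i0)) => //= k _; rewrite subn1 /=.
- move=> i; apply: (mulIf D0).
  rewrite de -(hid i) mulrBl -mulrA dq mulr_suml; congr (_ - _).
  by apply: eq_bigr => j _; rewrite -mulrA dq.
- move=> y hy; have [ey qy] := hinv y hy.
  have yt : y - tau != 0 by case/andP: hy => h _; rewrite subr_eq0 gt_eqF.
  have hE : e.[y] = (e %/ D).[y] * (y - tau) by rewrite -{1}de hornerM hornerXsubC.
  split.
    by move: ey; rewrite hE mulf_eq0 negb_or => /andP[].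
  move=> i; have := qy i; rewrite hE -{1}(dq i) hornerM hornerXsubC.
  rewrite mulrACA pmulr_lgt0 //.
  by rewrite lt_def mulf_neq0 //= -expr2 sqr_ge0.
Qed.

Lemma div_loop tau tb : tau < tb -> ~ good tau ->
  forall d (qq : 'I_n -> {poly R}) (e : {poly R}), (size (qq i0) <= d)%N -> Ident qq e -> Inv tau tb qq e ->
  exists v : 'cV[R]_n, [/\ v != 0, forall i, 0 <= v i 0 & C *m v = tau *: v].
Proof.
move=> ltb ngt d; elim: d => [|d IH] qq e hs hid hinv.
  have hbb : tau < tb <= tb by rewrite ltb lexx.
  have [_ /(_ i0) /prod_pos_neq0 [q0 _]] := hinv tb hbb.
  move: hs; rewrite leqn0 size_poly_eq0 => /eqP h.
  by move: q0; rewrite h horner0 eqxx.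
case: (boolP [exists i, (qq i).[tau] != 0]) => [/existsP ex|].
  exact: caseA ltb ngt hid hinv ex.
rewrite negb_exists => /forallP hz.
have hbb : tau < tb <= tb by rewrite ltb lexx.
have [_ /(_ i0) /prod_pos_neq0 [q0 _]] := hinv tb hbb.
have q0' : qq i0 != 0 by apply: contraNneq q0 => ->; rewrite horner0.
have [qq' [e' [hs' hid' hinv']]] :=
  caseB hid hinv (fun i => eqP (negPn (hz i))) q0'.
apply: (IH qq' e') => //; rewrite -ltnS; exact: leq_trans hs' hs.
Qed.

Definition QC := chiC * \prod_i qC i.

Lemma noQ y : ~~ root QC y -> chiC.[y] != 0 /\ forall i, (qC i).[y] != 0.
Proof.
rewrite /QC rootE hornerM horner_prod mulf_eq0 negb_or => /andP[c0 /prodf_neq0 hp].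
by split => // i; apply: hp.
Qed.

Lemma yesQ y : chiC.[y] != 0 -> (forall i, (qC i).[y] != 0) -> ~~ root QC y.
Proof.
move=> c0 hq; rewrite /QC rootE hornerM horner_prod mulf_neq0 //.
by apply/prodf_neq0 => i _; apply: hq.
Qed.

Lemma PF_exists : exists rho (v : 'cV[R]_n),
  [/\ 0 <= rho, v != 0, (forall i, 0 <= v i 0) & C *m v = rho *: v].
Proof.
pose tb : R := 1 + \sum_i \sum_j C i j.
have gtb : good tb.
  exists (const_mx 1); split => i; first by rewrite mxE ltr01.
  rewrite !mxE mulr1; under eq_bigr do rewrite mxE mulr1.
  apply: ltr_pwDl; first exact: ltr01.
  rewrite [X in _ <= X](bigD1 i) //= lerDl; apply: sumr_ge0 => k _.
  by apply: sumr_ge0 => j _; exact: hC.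
have tb0 := good_pos gtb.
have [cb qb] := good_inv gtb.
have nQb : ~~ root QC tb.
  by apply: yesQ => // i; have [] := prod_pos_neq0 (qb i).
have Q0 : QC != 0 by apply: contraNneq nQb => ->; rewrite root0.
have exr : exists x, 0 <= x <= tb /\ root QC x.
  apply: NNPP => nex.
  have h : forall y, 0 <= y <= tb -> ~~ root QC y.
    by move=> y hy; apply/negP => ry; apply: nex; exists y.
  have : good 0.
    have [c0 q0] := noQ (h 0 (ltac:(by rewrite lexx (ltW tb0)))).
    apply: (@from_poly qC chiC 0 (fun i => ident_ev 0 i) c0) => i.
    have s1 : 0 <= (qC i).[0] * (qC i).[tb].
      apply: sign_noroot (ltW tb0) _ => y /andP[y1 y2].
      have [_ hq] := noQ (h y (ltac:(by rewrite (ltW y1) y2))).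
      by rewrite rootE hq.
    have s3 : 0 < chiC.[tb] * chiC.[0].
      rewrite lt_def mulf_neq0 //= mulrC; apply: sign_noroot (ltW tb0) _.
      move=> y /andP[y1 y2].
      have [hc _] := noQ (h y (ltac:(by rewrite (ltW y1) y2))).
      by rewrite rootE hc.
    exact: sign_tr (sign_tr s1 (qb i)) s3.
  by move/good_pos; rewrite ltxx.
have [tau [htau rtau ntau]] := largest_root Q0 exr.
have taub : tau < tb.
  rewrite lt_def; case/andP: htau => _ ->; rewrite andbT.
  by apply: contraNneq nQb => ->.
have hinv : Inv tau tb qC chiC.
  move=> y /andP[y1 y2].
  have h : forall z, y <= z <= tb -> ~~ root QC z.
    move=> z /andP[z1 z2]; apply: ntau; rewrite z2 andbT.
    exact: lt_le_trans y1 z1.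
  have [cy qy] := noQ (h y (ltac:(by rewrite lexx y2))).
  have hr : forall z, y < z <= tb -> ~~ root QC z.
    by move=> z /andP[z1 z2]; apply: h; rewrite (ltW z1) z2.
  split => // i.
  have s1 : 0 < (qC i).[y] * (qC i).[tb].
    rewrite lt_def mulf_neq0 //=; last by have [] := prod_pos_neq0 (qb i).
    apply: sign_noroot y2 _ => z hz; have [_ hq] := noQ (hr z hz).
    by rewrite rootE hq.
  have s3 : 0 < chiC.[tb] * chiC.[y].
    rewrite lt_def mulf_neq0 //= mulrC; apply: sign_noroot y2 _.
    by move=> z hz; have [hc _] := noQ (hr z hz); rewrite rootE hc.
  exact: sign_trs (sign_trs s1 (qb i)) s3.
have ngt : ~ good tau.
  move=> gt; have [c0 q0] := good_inv gt.
  move: rtau; apply/negP; apply: yesQ => // i.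
  by have [] := prod_pos_neq0 (q0 i).
have [v [v0 vp ev]] := div_loop taub ngt (leqnn _) ident hinv.
exists tau, v; split => //; by case/andP: htau.
Qed.
End PF.

Section Spec.
Variable R : rcfType.
Local Open Scope complex_scope.

Lemma sum_complex (I : finType) (f g : I -> R) :
  (\sum_i f i) +i* (\sum_i g i) = \sum_i ((f i +i* g i) : R[i]).
Proof.
apply: (big_rec3 (fun s1 s2 (s3 : R[i]) => s1 +i* s2 = s3)) => // i a1 a2 a3 _ <-.
by [].
Qed.

Lemma normc_scale (c x y : R) : 0 <= c ->
  Normc.normc ((c * x) +i* (c * y)) = c * Normc.normc (x +i* y).
Proof.
move=> c0; have -> : (c * x) +i* (c * y) = (c +i* 0) * (x +i* y).
  by rewrite /=; congr (_ +i* _); lra.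
rewrite Normc.normcM /= expr0n /= addr0 sqrtr_sqr ger0_norm //.
Qed.

Lemma eig_bound n (C : 'M[R]_n) (v : 'cV[R]_n) t a b :
  (forall i j, 0 <= C i j) -> (forall i, 0 < v i 0) ->
  (forall i, (C *m v) i 0 <= t * v i 0) -> ceig R n C a b ->
  Num.sqrt (a ^+ 2 + b ^+ 2) <= t.
Proof.
move=> hC hv hCv; rewrite /ceig -det_tr tr_block_mx => /det0P [u u0 hu].
rewrite -(hsubmxK u) in u0 hu; move: (lsubmx u) (rsubmx u) u0 hu => x y u0 hu.
move: hu; rewrite mul_row_block => /eqP; rewrite row_mx_eq0 => /andP[/eqP h1 /eqP h2].
have e1 : forall j, \sum_k C j k * x 0 k = a * x 0 j - b * y 0 j.
  move=> j; have := congr1 (fun M : 'rV[R]_n => M 0 j) h1.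
  rewrite !linearB /= !tr_scalar_mx linearN /= tr_scalar_mx.
  rewrite mulmxN !mul_mx_scalar !mxE.
  have -> : \sum_j0 x 0 j0 * C^T j0 j = \sum_k C j k * x 0 k.
    by apply: eq_bigr => k _; rewrite mxE mulrC.
  move=> h; lra.
have e2 : forall j, \sum_k C j k * y 0 k = b * x 0 j + a * y 0 j.
  move=> j; have := congr1 (fun M : 'rV[R]_n => M 0 j) h2.
  rewrite !linearB /= !tr_scalar_mx.
  rewrite !mul_mx_scalar !mxE.
  have -> : \sum_j0 y 0 j0 * C^T j0 j = \sum_k C j k * y 0 k.
    by apply: eq_bigr => k _; rewrite mxE mulrC.
  move=> h; lra.
pose w j := Normc.normc (x 0 j +i* y 0 j).
have w0 : forall j, 0 <= w j by move=> j; rewrite /w /= sqrtr_ge0.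
have key : forall i, Num.sqrt (a ^+ 2 + b ^+ 2) * w i <= \sum_j C i j * w j.
  move=> i.
  have -> : Num.sqrt (a ^+ 2 + b ^+ 2) * w i =
      Normc.normc ((\sum_k C i k * x 0 k) +i* (\sum_k C i k * y 0 k)).
    rewrite e1 e2 /w -[Num.sqrt _]/(Normc.normc (a +i* b)) -Normc.normcM /=.
    congr (Num.sqrt (_ + _ ^+ 2)); lra.
  rewrite sum_complex.
  have := @ler_norm_sum R (Rcomplex R) _ (index_enum 'I_n)
    (fun k => (C i k * x 0 k) +i* (C i k * y 0 k)) predT.
  move/le_trans; apply; apply: ler_sum => k _.
  by rewrite -[`|_|]/(Normc.normc _) normc_scale.
have [k wk] : exists k, w k != 0.
  apply/existsP; apply: contraNT u0; rewrite negb_exists => /forallP hw.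
  have hxy : forall j, x 0 j = 0 /\ y 0 j = 0.
    by move=> j; have := hw j => /negPn /eqP /Normc.eq0_normc [-> ->].
  rewrite row_mx_eq0; apply/andP; split; apply/eqP/matrixP => i j;
    rewrite (ord1 i) mxE; by case: (hxy j).
pose F j := w j / v j 0.
case: (@arg_maxP _ R _ k (fun=> true) F isT) => i _ hmax.
have Fk : 0 < F k by rewrite /F divr_gt0 // lt_def wk w0.
have Fi : 0 < F i by apply: lt_le_trans Fk (hmax k isT).
have wi : 0 < w i by move: Fi; rewrite /F pmulr_lgt0 // invr_gt0.
have hw : forall j, w j <= F i * v j 0.
  by move=> j; rewrite -ler_pdivrMr //; exact: hmax.
have : Num.sqrt (a ^+ 2 + b ^+ 2) * w i <= t * w i.
  apply: (le_trans (key i)).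
  apply: (@le_trans _ _ (F i * (C *m v) i 0)).
    rewrite mxE mulr_sumr; apply: ler_sum => j _.
    by rewrite mulrCA; apply: ler_wpM2l.
  have -> : t * w i = F i * (t * v i 0).
    by rewrite /F mulrCA divfK ?gt_eqF.
  by apply: ler_wpM2l; [exact: ltW|].
by rewrite ler_pM2r.
Qed.

End Spec.

Section Gen.
Variable R : rcfType.

Lemma ceig_eigvec n (C : 'M[R]_n) (v : 'cV[R]_n) rho :
  v != 0 -> C *m v = rho *: v -> ceig R n C rho 0.
Proof.
move=> v0 ev; rewrite /ceig.
have -> : (0:R)%:M = 0 :> 'M[R]_n by apply/matrixP=> i j; rewrite !mxE mul0rn.
rewrite oppr0 det_ublock mulf_eq0; apply/orP; left.
rewrite -det_tr; apply/det0P; exists v^T.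
  by apply: contraNneq v0 => h; rewrite -[v]trmxK h trmx0.
by rewrite -trmx_mul mulmxBl mul_scalar_mx ev subrr trmx0.
Qed.

Lemma spec_rad n (C : 'M[R]_n) (v : 'cV[R]_n) rho (i0 : 'I_n) :
  (forall i j, 0 <= C i j) -> (forall i, 0 < v i 0) -> C *m v = rho *: v ->
  0 <= rho -> spectral_radius R n C rho.
Proof.
move=> hC hv ev r0; split.
  exists rho, 0; split.
    apply: (ceig_eigvec (v := v)) => //.
    by apply: contraTneq (hv i0) => ->; rewrite mxE ltxx.
  by rewrite expr0n /= addr0 sqrtr_sqr ger0_norm.
move=> a b hab; apply: (eig_bound hC hv _ hab) => i.
by rewrite ev mxE.
Qed.

Lemma irr_pos n (C : 'M[R]_n) rho (v : 'cV[R]_n) :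
  irreducible_mx R n C -> (forall i j, 0 <= C i j) -> v != 0 ->
  (forall i, 0 <= v i 0) -> C *m v = rho *: v -> forall i, 0 < v i 0.
Proof.
move=> hirr hC v0 vp ev.
pose S := [set i | v i 0 == 0].
case: (eqVneq S set0) => [S0|Sn0].
  move=> i; rewrite lt_def vp andbT.
  have : i \notin S by rewrite S0 inE.
  by rewrite inE.
have ST : S != setT.
  apply: contraNneq v0 => hS; apply/eqP/matrixP => i j; rewrite (ord1 j) mxE.
  have : i \in S by rewrite hS inE.
  by rewrite inE => /eqP.
have [i [j [iS jS Cij]]] := hirr S Sn0 ST.
move: iS jS; rewrite !inE => /eqP vi vj.
have : (C *m v) i 0 = 0 by rewrite ev mxE vi mulr0.
rewrite mxE (bigD1 j) //= => /eqP; rewrite gt_eqF //.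
apply: ltr_pwDl; last by apply: sumr_ge0 => k _; rewrite mulr_ge0.
by rewrite mulr_gt0 // lt_def ?Cij ?vj ?hC ?vp.
Qed.

Lemma zmat_unit n (G : 'M[R]_n) (v : 'cV[R]_n) :
  (forall i j, i != j -> G i j <= 0) ->
  (forall i, 0 < v i 0) -> (forall i, 0 < (G *m v) i 0) -> G \in unitmx.
Proof.
move=> hG hv hGv; rewrite unitmxE unitfE -det_tr; apply/negP => /det0P [u u0 hu].
have hw : G *m u^T = 0 by rewrite -[LHS]trmxK trmx_mul trmxK hu trmx0.
have p1 : forall i, 0 <= u^T i 0.
  by apply: (zmat_pos hG hv hGv) => i; rewrite hw mxE.
have p2 : forall i, 0 <= (- u^T) i 0.
  by apply: (zmat_pos hG hv hGv) => i; rewrite mulmxN hw oppr0 mxE.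
move/eqP: u0; apply; apply/matrixP => i j; rewrite (ord1 i) mxE.
apply/eqP; rewrite eq_le; have := p1 j; have := p2 j.
by rewrite !mxE oppr_ge0 => -> ->.
Qed.

End Gen.

Unset Implicit Arguments.
Section Net.
Variables (R : rcfType) (N : nat) (K : 'I_N -> nat)
  (g : forall i : 'I_N, 'I_(K i) -> 'I_N -> R) (sigma2 : R)
  (M : nat) (Om : 'I_M -> {set 'I_N}) (pbar : 'I_M -> R) (mu : 'I_N -> R).
Hypotheses (hK : forall i, (0 < K i)%N) (hg : forall i k j, 0 <= g i k j)
  (hgi : forall i k, 0 < g i k i) (hs : 0 < sigma2) (hmu : forall i, 0 < mu i)
  (hirr : forall kk : forall i : 'I_N, 'I_(K i),
      irreducible_mx R N (1%:M - Gmat R N K g mu kk))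
  (hM : (0 < M)%N) (hOm : forall m, Om m != set0) (hpb : forall m, 0 < pbar m).

Local Notation Gm kk := (Gmat R N K g mu kk).
Local Notation nv kk := (nG R N K g sigma2 mu kk).
Local Notation ar := (a_row R N K g mu).
Local Notation ne := (n_elt R N K g sigma2 mu).
Local Notation Cm kk m := (psi R N (1%:M - Gm kk) ((pbar m)^-1 *: nv kk) (Om m)).

Lemma ne_pos i k : 0 < ne i k.
Proof. by rewrite /n_elt divr_gt0 // mulr_gt0. Qed.

Lemma ar_entry i k j :
  ar i k 0 j = if j == i then 1 else - (mu i * g i k j / g i k i).
Proof. by rewrite mxE. Qed.

Lemma Gmv kk (p : 'cV[R]_N) i : (Gm kk *m p) i 0 = (ar i (kk i) *m p) 0 0.
Proof. by rewrite !mxE; apply: eq_bigr => j _; rewrite mxE. Qed.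

Lemma nv_entry kk i : nv kk i 0 = ne i (kk i).
Proof. by rewrite mxE. Qed.

Lemma ar_off i k j : j != i -> ar i k 0 j <= 0.
Proof.
move=> ji; rewrite ar_entry (negPf ji) oppr_le0.
by rewrite divr_ge0 // ?mulr_ge0 // ltW.
Qed.

Lemma Gm_off kk i j : i != j -> Gm kk i j <= 0.
Proof. by move=> ij; rewrite mxE ar_off // eq_sym. Qed.

Lemma ar_le (p : 'cV[R]_N) i k : (forall j, 0 <= p j 0) ->
  (ar i k *m p) 0 0 <= p i 0.
Proof.
move=> hp; rewrite mxE (bigD1 i) //= ar_entry eqxx mul1r -[leRHS]addr0 lerD2l.
by apply: sumr_le0 => j ji; rewrite mulr_le0_ge0 // ar_off.
Qed.

Lemma IG_ge0 kk i j : 0 <= (1%:M - Gm kk) i j.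
Proof.
rewrite !mxE; case: (eqVneq j i) => [_|ji].
  by rewrite /= subrr.
rewrite /= sub0r oppr_ge0.
by rewrite oppr_le0 divr_ge0 // ?mulr_ge0 // ltW.
Qed.

Definition extra kk m i j : R :=
  if j \in Om m then ((pbar m)^-1 *: nv kk) i 0 else 0.

Lemma extra_ge0 kk m i j : 0 <= extra kk m i j.
Proof.
rewrite /extra; case: ifP => // _; rewrite !mxE.
by rewrite mulr_ge0 // ?invr_ge0 ltW // ?ne_pos.
Qed.

Lemma Cm_entry kk m i j : Cm kk m i j = (1%:M - Gm kk) i j + extra kk m i j.
Proof. by rewrite /psi mxE. Qed.

Lemma Cm_ge0 kk m i j : 0 <= Cm kk m i j.
Proof. by rewrite Cm_entry addr_ge0 ?IG_ge0 ?extra_ge0. Qed.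

Lemma Cm_irr kk m : irreducible_mx R N (Cm kk m).
Proof.
move=> S S0 ST; have [i [j [iS jS nz]]] := hirr kk S S0 ST.
exists i, j; split => //; rewrite Cm_entry gt_eqF //.
by apply: ltr_wpDr; [exact: extra_ge0 | rewrite lt_def nz IG_ge0].
Qed.

Lemma Cm_mul kk m (p : 'cV[R]_N) i : (Cm kk m *m p) i 0 =
  p i 0 - (Gm kk *m p) i 0 + (pbar m)^-1 * ne i (kk i) * \sum_(j in Om m) p j 0.
Proof.
rewrite mxE.
have -> : \sum_j Cm kk m i j * p j 0 =
   \sum_j (1%:M - Gm kk) i j * p j 0 + \sum_j extra kk m i j * p j 0.
  by rewrite -big_split /=; apply: eq_bigr => j _; rewrite Cm_entry mulrDl.
congr (_ + _).
  transitivity (((1%:M - Gm kk) *m p) i 0); first by rewrite mxE.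
  by rewrite mulmxBl mul1mx mxE [in LHS]mxE.
rewrite mulr_sumr [RHS]big_mkcond /=; apply: eq_bigr => j _.
by rewrite /extra; case: ifP => _; rewrite ?mul0r // !mxE.
Qed.


Definition Hsr := forall (kk : forall i : 'I_N, 'I_(K i)) (m : 'I_M) (r : R),
  spectral_radius R N (Cm kk m) r -> r <= 1.

Lemma step1 (H : Hsr) kk m : exists v : 'cV[R]_N,
  [/\ forall i, 0 <= v i 0, forall i, ne i (kk i) <= (Gm kk *m v) i 0
    & \sum_(i in Om m) v i 0 <= pbar m].
Proof.
have [i0 i0m] := set0Pn _ (hOm m).
have [rho [v [r0 v0 vp ev]]] := @PF_exists R N (Cm kk m) i0 (Cm_ge0 kk m).
have hv := @irr_pos R N (Cm kk m) rho v (Cm_irr kk m) (Cm_ge0 kk m) v0 vp ev.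
have r1 : rho <= 1.
  exact: H kk m rho (@spec_rad R N (Cm kk m) v rho i0 (Cm_ge0 kk m) hv ev r0).
set s := \sum_(j in Om m) v j 0.
have s0 : 0 < s.
  rewrite /s (bigD1 i0) //=; apply: ltr_pwDl => //.
  by apply: sumr_ge0 => j _; exact: vp.
have hG : forall i, (pbar m)^-1 * ne i (kk i) * s <= (Gm kk *m v) i 0.
  move=> i; have := Cm_mul kk m v i; rewrite ev mxE -/s => h.
  have : rho * v i 0 <= v i 0 by rewrite ler_piMl.
  rewrite h => h2; lra.
have ps0 : 0 <= pbar m / s by rewrite divr_ge0 // ltW.
exists ((pbar m / s) *: v); split.
- by move=> i; rewrite mxE mulr_ge0.
- move=> i; rewrite -scalemxAr mxE.
  have e : ne i (kk i) = pbar m / s * ((pbar m)^-1 * ne i (kk i) * s).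
    by field; rewrite ?gt_eqF.
  rewrite {1}e.
  by apply: ler_wpM2l => //; apply: hG.
- under eq_bigr do rewrite mxE.
  by rewrite -mulr_sumr -/s divfK ?gt_eqF.
Qed.

Lemma witness (H : Hsr) kk : exists v : 'cV[R]_N,
  (forall i, 0 < v i 0) /\ (forall i, 0 < (Gm kk *m v) i 0).
Proof.
have [v [vp hv _]] := step1 H kk (Ordinal hM).
have gp : forall i, 0 < (Gm kk *m v) i 0.
  by move=> i; apply: lt_le_trans (hv i); exact: ne_pos.
exists v; split => // i; apply: (lt_le_trans (gp i)).
by rewrite Gmv; apply: ar_le.
Qed.

Lemma mono (H : Hsr) kk (w : 'cV[R]_N) :
  (forall i, 0 <= (Gm kk *m w) i 0) -> forall i, 0 <= w i 0.
Proof.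
have [v [vp gp]] := witness H kk.
exact: (zmat_pos (Gm_off kk) vp gp).
Qed.

Lemma Gunit (H : Hsr) kk : Gm kk \in unitmx.
Proof.
have [v [vp gp]] := witness H kk.
exact: (zmat_unit (Gm_off kk) vp gp).
Qed.

Lemma entryB (A B : 'cV[R]_N) i : (A - B) i 0 = A i 0 - B i 0.
Proof. by rewrite !mxE. Qed.

Definition pp kk := invmx (Gm kk) *m nv kk.

Lemma Gpp (H : Hsr) kk : Gm kk *m pp kk = nv kk.
Proof. by rewrite /pp mulmxA mulmxV ?mul1mx // Gunit. Qed.

Lemma pp_ge0 (H : Hsr) kk i : 0 <= pp kk i 0.
Proof.
apply: (mono H kk) => j; rewrite Gpp // nv_entry; exact: ltW (ne_pos _ _).
Qed.

Lemma pp_min (H : Hsr) kk (v : 'cV[R]_N) :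
  (forall i, ne i (kk i) <= (Gm kk *m v) i 0) -> forall i, pp kk i 0 <= v i 0.
Proof.
move=> hv i; rewrite -subr_ge0 -entryB.
apply: (mono H kk) => j.
by rewrite mulmxBr Gpp // entryB subr_ge0 nv_entry hv.
Qed.

Lemma pp_sum (H : Hsr) kk m : \sum_(i in Om m) pp kk i 0 <= pbar m.
Proof.
have [v [vp hv hs']] := step1 H kk m.
apply: le_trans hs'; apply: ler_sum => i _; exact: pp_min.
Qed.

Lemma forward : (exists p : 'cV[R]_N,
      [/\ forall i, 0 <= p i 0,
          forall m, \sum_(i in Om m) p i 0 <= pbar m
        & A_ge_n R N K g sigma2 mu p]) -> Hsr.
Proof.
move=> [p [p0 psum hA]] kk m r [[a [b [hab ->]]] _].
have ppos : forall i, 0 < p i 0.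
  move=> i; apply: (lt_le_trans (ne_pos i (Ordinal (hK i)))).
  exact: le_trans (hA i _) (ar_le p i _ p0).
apply: (eig_bound (Cm_ge0 kk m) ppos _ hab) => i.
rewrite Cm_mul mul1r.
have h1 := hA i (kk i); rewrite -Gmv in h1.
have c0 : 0 <= (pbar m)^-1 * ne i (kk i).
  by rewrite mulr_ge0 // ?invr_ge0 ltW // ?ne_pos.
have h2 : (pbar m)^-1 * ne i (kk i) * \sum_(j in Om m) p j 0 <= ne i (kk i).
  have e : ne i (kk i) = (pbar m)^-1 * ne i (kk i) * pbar m.
    by field; rewrite gt_eqF.
  by rewrite [X in _ <= X]e; apply: ler_wpM2l.
lra.
Qed.

Lemma backward (H : Hsr) : exists p : 'cV[R]_N,
      [/\ forall i, 0 <= p i 0,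
          forall m, \sum_(i in Om m) p i 0 <= pbar m
        & A_ge_n R N K g sigma2 mu p].
Proof.
pose T := {dffun forall i : 'I_N, 'I_(K i)}.
pose f0 : T := finfun (fun i => Ordinal (hK i)).
pose F (f : T) := \sum_i pp (fun i => f i) i 0.
case: (@arg_maxP _ R T f0 (fun=> true) F isT) => fs _ hmax.
pose p := pp (fun i => fs i).
exists p; split.
- exact: pp_ge0 H _.
- exact: pp_sum H _.
move=> i k; rewrite leNgt; apply/negP => hlt.
pose f' : T := finfun (dfwith (fun j => fs j) k).
have f'i : f' i = k by rewrite ffunE dfwith_in.
have f'j : forall j, j != i -> f' j = fs j.
  by move=> j ji; rewrite ffunE dfwith_out // eq_sym.
pose w := pp (fun j => f' j) - p.
have hw : forall j, 0 <= (Gm (fun j => f' j) *m w) j 0 /\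
    (j = i -> 0 < (Gm (fun j => f' j) *m w) j 0).
  move=> j; rewrite mulmxBr Gpp // entryB nv_entry Gmv /=.
  case: (eqVneq j i) => [->|ji].
    by rewrite f'i subr_gt0 subr_ge0 (ltW hlt).
  rewrite f'j //.
  have := Gmv (fun i => fs i) p j; rewrite (Gpp H) nv_entry /= => <-.
  by rewrite subrr lexx; split => // ej; move: ji; rewrite ej eqxx.
have w0 := mono H (fun j => f' j) w (fun j => (hw j).1).
have sw : 0 < \sum_j w j 0.
  rewrite lt_def sumr_ge0 ?andbT //; apply/negP => /eqP hs0.
  have wz := psumr_eq0P (fun j _ => w0 j) hs0.
  have := (hw i).2 erefl; rewrite mxE big1 ?ltxx // => j _.
  by rewrite wz // mulr0.
have := hmax f' isT.
have -> : F f' = F fs + \sum_j w j 0.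
  rewrite /F -big_split; apply: eq_bigr => j _.
  by rewrite /w entryB /= /p addrC subrK.
move=> h; have h' : F fs + \sum_j w j 0 <= F fs := h; lra.
Qed.
End Net.


Theorem theorem6 (R : rcfType) (N : nat) (K : 'I_N -> nat)
  (g : forall i : 'I_N, 'I_(K i) -> 'I_N -> R) (sigma2 : R)
  (M : nat) (Om : 'I_M -> {set 'I_N}) (pbar : 'I_M -> R) (mu : 'I_N -> R) :
  (forall i, (0 < K i)%N) ->
  (forall i k j, 0 <= g i k j) ->
  (forall i k, 0 < g i k i) ->
  0 < sigma2 ->
  (forall i, 0 < mu i) ->
  (forall kk : forall i : 'I_N, 'I_(K i),
      irreducible_mx R N (1%:M - Gmat R N K g mu kk)) ->
  (0 < M)%N ->
  (forall m, Om m != set0) ->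
  (forall m, 0 < pbar m) ->
  (exists p : 'cV[R]_N,
      [/\ forall i, 0 <= p i 0,
          forall m, \sum_(i in Om m) p i 0 <= pbar m
        & A_ge_n R N K g sigma2 mu p])
  <->
  (forall (kk : forall i : 'I_N, 'I_(K i)) (m : 'I_M) (r : R),
      spectral_radius R N
        (psi R N (1%:M - Gmat R N K g mu kk) ((pbar m)^-1 *: nG R N K g sigma2 mu kk) (Om m)) r ->
      r <= 1).
Proof.
move=> hK hg hgi hs hmu hirr hM hOm hpb; split.
  exact: (forward R N K g sigma2 M Om pbar mu hK hg hgi hs hmu hpb).
exact: (backward R N K g sigma2 M Om pbar mu hK hg hgi hs hmu hirr hM hOm hpb).
Qed.
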